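(* Let $q,d\geq 2$ be integers. For every $A\in\mathbb{N}$ and every $\mathbf{s}=(\theta_u,\theta_w,\theta_2,\theta_1,\theta_0)\in\mathbb{Z}^5$ (a row vector), $$\gamma(qA,q,d;\mathbf{s})=\sum_{\lambda=0}^{q-1}\gamma(A,q,d;\mathbf{s}M_\lambda),$$ where, for each $\lambda\in\{0,\ldots,q-1\}$, $$M_\lambda=\begin{pmatrix} q & \lambda-q+1 & q & \lambda-q+1 & 0\\ 0 & 1 & 0 & 1 & 0\\ 0 & 0 & q^2 & \lambda q-\frac{q(q-1)}{2} & \frac{\lambda(\lambda+1)}{2}\\ 0 & 0 & 0 & q & \lambda\\ 0 & 0 & 0 & 0 & 1 \end{pmatrix}.$$
   Context: For an integer $q\geq 2$ and $n\in\mathbb{N}=\{0,1,2,\ldots\}$: $v_q(0)=0$ and, for $n>0$, $v_q(n)=\max\{k\in\mathbb{N}: q^k\mid n\}$; $w_q(n)=\sum_{i=0}^n v_q(i)$; $u_q(n)=\sum_{i=0}^n w_q(i)$. For $\mathbf{s}=(\theta_u,\theta_w,\theta_2,\theta_1,\theta_0)\in\mathbb{Z}^5$ and $A\in\mathbb{N}$, $\gamma(A,q,d;\mathbf{s})$ denotes the number of $n\in\mathbb{N}$ with $n<A$ such that $\theta_u u_q(n)+\theta_w w_q(n)+\theta_2\frac{n(n+1)}{2}+\theta_1 n+\theta_0\equiv 0 \pmod d$. *)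

(* Defs.v *)
From HB Require Import structures.
From mathcomp Require Import all_boot all_order all_algebra.
Set Implicit Arguments.
Unset Strict Implicit.
Unset Printing Implicit Defensive.
Import Order.TTheory GRing.Theory Num.Theory.
Local Open Scope ring_scope.

(* v_q(0) = 0; for n > 0, v_q(n) = max { k : q^k | n }.
   For q >= 2 and n > 0 every such k satisfies k < n+1, so the max over
   k < n.+1 is the max over all k. *)
Definition vq (q n : nat) : nat :=
  (if n == 0 then 0 else \max_(k < n.+1 | q ^ k %| n) (k : nat))%N.

Definition wq (q n : nat) : nat := (\sum_(0 <= i < n.+1) vq q i)%N.
Definition uq (q n : nat) : nat := (\sum_(0 <= i < n.+1) wq q i)%N.

Definition gamma_form (q : nat) (s : 'rV[int]_5) (n : nat) : int :=
  (s 0 0 * (uq q n)%:Z + s 0 1 * (wq q n)%:Z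
   + s 0 2 * ((n * n.+1) %/ 2)%N%:Z + s 0 3 * n%:Z + s 0 4)%R.

Definition gamma (A q d : nat) (s : 'rV[int]_5) : nat :=
  count (fun n => ((d : int) %| gamma_form q s n)%Z) (iota 0 A).

Definition Mlam (q lam : nat) : 'M[int]_5 :=
  \matrix_(i < 5, j < 5)
   match nat_of_ord i, nat_of_ord j with
   | 0, 0 => q%:Z
   | 0, 1 => (lam%:Z - q%:Z + 1)%R
   | 0, 2 => q%:Z
   | 0, 3 => (lam%:Z - q%:Z + 1)%R
   | 1, 1 => 1%R
   | 1, 3 => 1%R
   | 2, 2 => (q ^ 2)%N%:Z
   | 2, 3 => (lam%:Z * q%:Z - ((q * q.-1) %/ 2)%N%:Z)%R
   | 2, 4 => ((lam * lam.+1) %/ 2)%N%:Z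
   | 3, 3 => q%:Z
   | 3, 4 => lam%:Z
   | 4, 4 => 1%R
   | _, _ => 0%R
   end.

(* Main.v *)
Require Import Defs.
From mathcomp Require Import all_boot all_order all_algebra.
From mathcomp Require Import zify ring lra.
Import GRing.Theory Num.Theory.

Lemma vq_spec q n : 1 < q -> 0 < n ->
  q ^ vq q n %| n /\ forall k, q ^ k %| n -> k <= vq q n.
Proof.
move=> hq hn; rewrite /vq; have -> : (n == 0) = false by lia.
split.
  apply: (big_ind (fun x => q ^ x %| n)).
  - by rewrite expn0 dvd1n.
  - by move=> x y hx hy; rewrite /maxn; case: ifP.
  - by [].
move=> k hk.
have hkn : k < n.+1.
  have := dvdn_leq hn hk; have := ltn_expl k hq; lia.
by have := @leq_bigmax_cond _ (fun i : 'I_n.+1 => q ^ i %| n) (fun i => nat_of_ord i) (Ordinal hkn) hk.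
Qed.

Lemma vq_eq q n k : 1 < q -> 0 < n -> q ^ k %| n -> ~~ (q ^ k.+1 %| n) -> vq q n = k.
Proof.
move=> hq hn h1 h2; have [s1 s2] := vq_spec q n hq hn.
have := s2 _ h1; rewrite leq_eqVlt => /orP [/eqP -> //|hlt].
case/negP: h2; apply: dvdn_trans s1; exact: dvdn_exp2l.
Qed.

Lemma vq_mul q m : 1 < q -> 0 < m -> vq q (q * m) = (vq q m).+1.
Proof.
move=> hq hm; have [s1 _] := vq_spec q m hq hm.
apply: vq_eq => //; first by lia.
  by rewrite expnS dvdn_pmul2l //; lia.
rewrite expnS dvdn_pmul2l; last lia.
apply/negP => h; have [_ s2] := vq_spec q m hq hm; have := s2 _ h; lia.
Qed.

Lemma vq_nd q m l : 1 < q -> 0 < l < q -> vq q (q * m + l) = 0.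
Proof.
move=> hq hl; apply: vq_eq => //; first lia.
rewrite expn1 dvdn_addr ?dvdn_mulr //; apply/negP => /dvdn_leq; lia.
Qed.

Lemma wqS q n : wq q n.+1 = wq q n + vq q n.+1.
Proof. by rewrite /wq big_nat_recr. Qed.
Lemma wq0 q : wq q 0 = 0.
Proof. by rewrite /wq big_nat1 /vq. Qed.
Lemma uqS q n : uq q n.+1 = uq q n + wq q n.+1.
Proof. by rewrite /uq big_nat_recr. Qed.
Lemma uq0 q : uq q 0 = 0.
Proof. by rewrite /uq big_nat1 wq0. Qed.

Lemma wq_blk q m l : 1 < q -> l < q -> wq q (q * m + l) = wq q (q * m).
Proof.
move=> hq; elim: l => [|l IH] hl; first by rewrite addn0.
rewrite addnS wqS -addnS vq_nd ?IH ?addn0 //; lia.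
Qed.

Lemma wq_main q m l : 1 < q -> l < q -> wq q (q * m + l) = wq q m + m.
Proof.
move=> hq hl; rewrite wq_blk //; elim: m => [|m IH]; first by rewrite muln0 wq0.
have -> : q * m.+1 = (q * m + q.-1).+1 by lia.
rewrite wqS wq_blk; last 2 [lia].
have -> : (q * m + q.-1).+1 = q * m.+1 by lia.
rewrite IH vq_mul // wqS; lia.
lia.
Qed.

Lemma tri2 m : (m * m.+1) %/ 2 * 2 = m * m.+1.
Proof. by apply: divnK; rewrite dvdn2 oddM /=; case: (odd m). Qed.

Lemma triS m : (m.+1 * m.+2) %/ 2 = (m * m.+1) %/ 2 + m.+1.
Proof. have h1 := tri2 m; have h2 := tri2 m.+1; nia. Qed.

Lemma uq_blk q m l : 1 < q -> l < q -> uq q (q * m + l) = uq q (q * m) + l * (wq q m + m).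
Proof.
move=> hq; elim: l => [|l IH] hl; first by rewrite addn0 mul0n addn0.
rewrite addnS uqS -addnS wq_main // IH; lia.
Qed.

Lemma uq_mul q m : 1 < q ->
  uq q (q * m) + q * (wq q m + m) = q * uq q m + q * ((m * m.+1) %/ 2) + (wq q m + m).
Proof.
move=> hq; elim: m => [|m IH]; first by rewrite muln0 uq0 wq0 /=; lia.
have e : q * m.+1 = (q * m + q.-1).+1 by lia.
have hw : wq q (q * m + q.-1).+1 = wq q m.+1 + m.+1.
  by rewrite -e -(addn0 (q * m.+1)) wq_main //; lia.
rewrite e uqS uq_blk //; last lia.
rewrite hw triS uqS.
move: IH; case: q hq {e hw} => [|p] //= hq IH.
nia.
Qed.

Lemma tri_aux q p m l X T L Q : q = p + 1 ->
  X * 2 = (q * m + l) * (q * m + l).+1 -> T * 2 = m * m.+1 ->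
  L * 2 = l * l.+1 -> Q * 2 = q * p ->
  X + Q * m = q * q * T + l * q * m + L.
Proof.
move=> -> hX hT hL hQ.
have hQm : Q * m * 2 = (p + 1) * p * m by rewrite mulnAC hQ.
have hTq : (p + 1) * (p + 1) * T * 2 = (p + 1) * (p + 1) * (m * m.+1) by rewrite -mulnA hT.
lia.
Qed.

Lemma tri_blk q m l : 1 < q ->
  ((q * m + l) * (q * m + l).+1) %/ 2 + (q * q.-1) %/ 2 * m =
  q ^ 2 * ((m * m.+1) %/ 2) + l * q * m + (l * l.+1) %/ 2.
Proof.
move=> hq; rewrite -mulnn.
have h4 := tri2 q.-1; have e : q.-1.+1 = q by lia.
rewrite e [q.-1 * q]mulnC in h4.
apply: (tri_aux q q.-1); [lia | exact: tri2 | exact: tri2 | exact: tri2 | exact: h4].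
Qed.

Local Open Scope ring_scope.
Lemma form_blk q s m l : (1 < q)%N -> (l < q)%N ->
  gamma_form q s (q * m + l) = gamma_form q (s *m Mlam q l) m.
Proof.
move=> hq hl.
have hU : (uq q (q * m + l))%:Z = q%:Z * (uq q m)%:Z + (l%:Z - q%:Z + 1) * (wq q m)%:Z
   + q%:Z * ((m * m.+1) %/ 2)%N%:Z + (l%:Z - q%:Z + 1) * m%:Z.
  have h1 := uq_blk q m l hq hl; have h2 := congr1 Posz (uq_mul q m hq).
  rewrite h1 !PoszD !PoszM in h2 *.
  rewrite -[(uq q (q * m))%:Z](addrK (q%:Z * ((wq q m)%:Z + m%:Z))) h2.
  ring.
have hW : (wq q (q * m + l))%:Z = (wq q m)%:Z + m%:Z by rewrite wq_main.
have hT : (((q * m + l) * (q * m + l).+1) %/ 2)%N%:Z = (q ^ 2)%N%:Z * ((m * m.+1) %/ 2)%N%:Z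
   + (l%:Z * q%:Z - ((q * q.-1) %/ 2)%N%:Z) * m%:Z + ((l * l.+1) %/ 2)%N%:Z.
  have h := congr1 Posz (tri_blk q m l hq).
  rewrite !PoszD !PoszM in h.
  rewrite -[LHS](addrK (((q * q.-1) %/ 2)%N%:Z * m%:Z)) h.
  ring.
rewrite /gamma_form !mxE !big_ord_recl !big_ord0 !mxE /=.
rewrite hU hW hT.
have L1 : lift ord0 ord0 = 1 :> 'I_5 by apply/val_inj.
have L2 : lift ord0 (lift ord0 ord0) = 2 :> 'I_5 by apply/val_inj.
have L3 : lift ord0 (lift ord0 (lift ord0 ord0)) = 3 :> 'I_5 by apply/val_inj.
have L4 : lift ord0 (lift ord0 (lift ord0 (lift ord0 ord0))) = 4 :> 'I_5 by apply/val_inj.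
rewrite L4 L3 L2 L1 !PoszD !PoszM.
ring.
Qed.
Local Close Scope ring_scope.

Lemma count_sum (P : pred nat) n : count P (iota 0 n) = \sum_(0 <= i < n) P i.
Proof.
elim: n => [|n IH]; first by rewrite big_geq.
by rewrite big_nat_recr // -addn1 iotaD count_cat IH /= addn0.
Qed.

Lemma sum_split (F : nat -> nat) q A :
  \sum_(0 <= i < q * A) F i = \sum_(lam < q) \sum_(0 <= m < A) F (q * m + lam).
Proof.
elim: A => [|A IH].
  by rewrite muln0 big_geq // big1 // => i _; rewrite big_geq.
rewrite mulnS addnC (@big_cat_nat _ _ _ (q * A)) //= ?leq_addr // IH.
rewrite -{1}(add0n (q * A)) big_addn addKn big_mkord -big_split /=.
by apply: eq_bigr => i _; rewrite big_nat_recr //= (addnC i).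
Qed.

Theorem proposition2p3 (q d : nat) (hq : (2 <= q)%N) (hd : (2 <= d)%N)
  (A : nat) (s : 'rV[int]_5) :
  gamma (q * A) q d s = (\sum_(lam < q) gamma A q d (s *m Mlam q lam))%N.
Proof.
rewrite /gamma count_sum sum_split.
apply: eq_bigr => lam _; rewrite count_sum.
apply: eq_big_nat => m _.
by rewrite form_blk.
Qed.
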